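(* Let $\widehat V=\widehat S+\widehat F\in\mathrm{End}(\mathbb R^n)$ with $\widehat S^\top=\widehat S$, $\widehat F^\top=-\widehat F$, and let $H(\tilde\rho,y)=\tfrac12\|y\|^2+\langle y,\widehat V\tilde\rho\rangle$ on $N=\mathbb R^{2n}$ with symplectic form $\Omega=d\tilde\rho^i\wedge dy_i$, extended holomorphically (bilinearly) to $N_{\mathbb C}\simeq\mathbb C^{2n}$, with complex Hamiltonian vector field $X_H(\tilde\rho,y)=(a,b)=(y+\widehat V\tilde\rho,\,-\widehat V^\top y)$. Let $M_\ast=(1-i)I$ (so $\mathrm{Im}\,M_\ast=-I$), and let $\Pi^{(+)}_{M_\ast}$ be the projector of $\mathbb C^n\oplus\mathbb C^n$ onto $L^{(+)}=\{(u,M_\ast u)\}$ along $L^{(-)}=\{(u,\bar M_\ast u)\}$, explicitly $\Pi^{(+)}_{M_\ast}(a,b)=(u,M_\ast u)$ with $u=(2i\,\mathrm{Im}\,M_\ast)^{-1}(b-\bar M_\ast a)$. Consider the projected dynamics $\dot z=\Pi^{(+)}_{M_\ast}X_H(z)$ for $z=(\tilde\rho,y)\in\mathbb C^{2n}$, and set $\psi=(1-i)\tilde\rho+iy$, $\phi=(1+i)\tilde\rho-iy$. Then each affine leaf $\{\phi=\phi_0\}$ is invariant under this dynamics (in particular $\{\phi=0\}$ is invariant), and on $\{\phi=0\}$ one has $i\dot\psi=(I+\widehat S+i\widehat F)\psi$. Equivalently, $\Psi(t):=e^{it}\psi(t)$ satisfies $i\dot\Psi=(\widehat S+i\widehat 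F)\Psi$.
   Context: $\langle\cdot,\cdot\rangle$, $\|\cdot\|$ denote the Euclidean inner product/norm, extended complex-bilinearly where needed. *)

(* Defs.v *)
From mathcomp Require Import all_boot all_order all_algebra.
From mathcomp Require Import all_classical all_reals all_analysis.
From mathcomp Require Import complex.
Set Implicit Arguments. Unset Strict Implicit. Unset Printing Implicit Defensive.
Import Order.TTheory GRing.Theory Num.Theory.
Local Open Scope ring_scope.

Section Defs.
Variable R : realType.
Local Notation C := R[i].

Definition RtoC (x : R) : C := real_complex R x.

Definition has_deriv (f : R -> C) (t : R) (l : C) : Prop :=
  forall e : R, 0 < e -> exists d : R, 0 < d /\
    forall h : R, h != 0 -> `|h| < d ->
      `| (RtoC h)^-1 * (f (t + h) - f t) - l | < RtoC e.

Definition has_vderiv n (f : R -> 'cV[C]_n) (t : R) (l : 'cV[C]_n) : Prop :=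
  forall j : 'I_n, has_deriv (fun s => f s j 0) t (l j 0).

Definition cmx m n (A : 'M[R]_(m, n)) : 'M[C]_(m, n) := map_mx RtoC A.

(* complex Hamiltonian vector field of H(rho,y) = 1/2|y|^2 + <y, V rho>
   (bilinear extension):  X_H(rho, y) = (y + V rho, - V^T y) *)
Definition XH n (V : 'M[R]_n) (rho y : 'cV[C]_n) : 'cV[C]_n * 'cV[C]_n :=
  (y + cmx V *m rho, - (cmx V)^T *m y).

Definition Im_mx n (M : 'M[C]_n) : 'M[C]_n := map_mx (fun x => 'Im x) M.
Definition conj_mx n (M : 'M[C]_n) : 'M[C]_n := map_mx (fun x => x^*) M.

(* projector onto L+ = {(u, M u)} along L- = {(u, conj(M) u)}:
   Pi(a,b) = (u, M u) with u = (2i Im M)^{-1} (b - conj(M) a) *)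
Definition Pi_plus n (M : 'M[C]_n) (ab : 'cV[C]_n * 'cV[C]_n)
  : 'cV[C]_n * 'cV[C]_n :=
  let u := invmx ((2 * 'i) *: Im_mx M) *m (ab.2 - conj_mx M *m ab.1) in
  (u, M *m u).

Definition Mstar n : 'M[C]_n := (1 - 'i)%:M.

Definition psi_of n (rho y : 'cV[C]_n) : 'cV[C]_n := (1 - 'i) *: rho + 'i *: y.
Definition phi_of n (rho y : 'cV[C]_n) : 'cV[C]_n := (1 + 'i) *: rho - 'i *: y.

Definition expi (t : R) : C := RtoC (cos t) + 'i * RtoC (sin t).

End Defs.

(* Main.v *)
Require Import Defs.
From mathcomp Require Import all_boot all_order all_algebra.
From mathcomp Require Import all_classical all_reals all_analysis.
From mathcomp Require Import complex.
From mathcomp Require Import ring.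
Import Order.TTheory GRing.Theory Num.Theory.
Import numFieldNormedType.Exports.
Local Open Scope ring_scope.
Local Open Scope classical_set_scope.

Lemma near0P (R : realType) (P : R -> Prop) :
  (\forall h \near 0^', P h) <-> exists d : R, 0 < d /\ forall h, h != 0 -> `|h| < d -> P h.
Proof.
rewrite near_withinE; split.
- move=> /nbhs_ballP[d d0 H]; exists d; split => // h h0 hd.
  apply: H => //; rewrite /ball /= sub0r normrN //.
- move=> [d [d0 H]]; apply/nbhs_ballP; exists d => // h.
  rewrite /ball /= sub0r normrN => hd h0; exact: H.
Qed.

Lemma is_derive_eps (R : realType) (g : R -> R) (t l : R) :
  is_derive t (1:R) g l <-> (forall e, 0<e -> exists d, 0<d /\ forall h, h != 0 -> `|h| < d -> `|h^-1 * (g (t+h) - g t) - l| < e).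
Proof.
have E : (fun h : R => h^-1 *: ((g \o shift t) (h *: (1:R)) - g t)) = (fun h => h^-1 * (g (t+h) - g t)).
  apply: funext => h /=; rewrite /shift /=.
  rewrite [X in g X]addrC; congr (_ * (g (_ + _) - _)); exact: mulr1.
have K : ((fun h : R => h^-1 *: ((g \o shift t) (h *: (1:R)) - g t)) @ (0:R)^' --> l) <->
   (forall e, 0<e -> exists d, 0<d /\ forall h, h != 0 -> `|h| < d -> `|h^-1 * (g (t+h) - g t) - l| < e).
  rewrite E; split.
  - move=> /cvgrPdist_lt H e e0; apply/near0P; move: (H e e0).
    apply: filterS => h; by rewrite distrC.
  - move=> H; apply/cvgrPdist_lt => e e0; have /near0P := H e e0.
    apply: filterS => h; by rewrite distrC.
split.
- move=> [D V]; apply/K; rewrite -V; exact: D.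
- move=> /K H; split; [exact: (cvgP _ H) | exact: (cvg_lim _ H)].
Qed.

Section C.
Variable R : realType.
Local Notation C := R[i].

Lemma RtoC_ltE (w : C) (e : R) :
  (`|w| < RtoC e) = (Num.sqrt (complex.Re w ^+ 2 + complex.Im w ^+ 2) < e).
Proof. by rewrite normc_def /RtoC ltcR. Qed.

Lemma sqrt_ge_l (a b : R) : `|a| <= Num.sqrt (a ^+ 2 + b ^+ 2).
Proof. by rewrite -sqrtr_sqr ler_wsqrtr // lerDl sqr_ge0. Qed.

Lemma sqrt_ge_r (a b : R) : `|b| <= Num.sqrt (a ^+ 2 + b ^+ 2).
Proof. by rewrite addrC sqrt_ge_l. Qed.

Lemma sqrt_le (a b : R) : Num.sqrt (a ^+ 2 + b ^+ 2) <= `|a| + `|b|.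
Proof.
rewrite -[`|a| + `|b|]ger0_norm ?addr_ge0 // -sqrtr_sqr ler_wsqrtr //.
rewrite sqrrD !real_normK ?num_real // -addrA lerD2l lerDr.
by rewrite mulrn_wge0 // mulr_ge0.
Qed.

Lemma Re_q (x : R) (z : C) : complex.Re ((RtoC x)^-1 * z) = x^-1 * complex.Re z.
Proof. rewrite /RtoC -fmorphV; case: z => a b /=; by rewrite mul0r subr0. Qed.
Lemma Im_q (x : R) (z : C) : complex.Im ((RtoC x)^-1 * z) = x^-1 * complex.Im z.
Proof. rewrite /RtoC -fmorphV; case: z => a b /=; by rewrite mul0r addr0. Qed.

Lemma has_derivP (f : R -> C) (t : R) (l : C) :
  has_deriv f t l <-> is_derive t (1:R) (fun s => complex.Re (f s)) (complex.Re l)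
                   /\ is_derive t (1:R) (fun s => complex.Im (f s)) (complex.Im l).
Proof.
rewrite !is_derive_eps; split.
- move=> H; split => e e0; have [d [d0 Hd]] := H e e0; exists d; split => // h h0 hd;
  have := Hd h h0 hd; rewrite RtoC_ltE; apply: le_lt_trans.
  + have := sqrt_ge_l (complex.Re ((RtoC h)^-1 * (f (t + h) - f t) - l))
                       (complex.Im ((RtoC h)^-1 * (f (t + h) - f t) - l)).
    by rewrite raddfB /= Re_q raddfB.
  + have := sqrt_ge_r (complex.Re ((RtoC h)^-1 * (f (t + h) - f t) - l))
                       (complex.Im ((RtoC h)^-1 * (f (t + h) - f t) - l)).
    by rewrite [complex.Im (_ - l)]raddfB /= Im_q [complex.Im (_ - f t)]raddfB.
- move=> [H1 H2] e e0.
  have e20 : 0 < e / 2 by rewrite divr_gt0.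
  have [d1 [d10 Hd1]] := H1 _ e20; have [d2 [d20 Hd2]] := H2 _ e20.
  exists (Num.min d1 d2); split; first by rewrite lt_min d10 d20.
  move=> h h0; rewrite lt_min => /andP[hd1 hd2].
  rewrite RtoC_ltE; apply: le_lt_trans (sqrt_le _ _) _.
  rewrite [e]splitr; apply: ltrD.
  + by have := Hd1 h h0 hd1; rewrite raddfB /= Re_q raddfB.
  + by have := Hd2 h h0 hd2; rewrite raddfB /= Im_q raddfB.
Qed.

Lemma is_derive_ext (g1 g2 : R -> R) (t l1 l2 : R) :
  (forall s, g1 s = g2 s) -> l1 = l2 -> is_derive t (1:R) g1 l1 -> is_derive t (1:R) g2 l2.
Proof. move=> E <-; have -> : g2 = g1 by apply: funext => s; rewrite E. by []. Qed.

Lemma has_deriv_ext (f g : R -> C) (t : R) (l1 l2 : C) :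
  (forall s, f s = g s) -> l1 = l2 -> has_deriv f t l1 -> has_deriv g t l2.
Proof. move=> E <-; have -> : g = f by apply: funext => s; rewrite E. by []. Qed.

Lemma has_deriv_add (f g : R -> C) t a b :
  has_deriv f t a -> has_deriv g t b -> has_deriv (fun s => f s + g s) t (a + b).
Proof.
move=> /has_derivP[f1 f2] /has_derivP[g1 g2]; apply/has_derivP; split.
- apply: is_derive_ext (is_deriveD f1 g1) => [s|]; by rewrite raddfD.
- apply: is_derive_ext (is_deriveD f2 g2) => [s|]; by rewrite raddfD.
Qed.

Lemma has_deriv_mul (f g : R -> C) t a b :
  has_deriv f t a -> has_deriv g t b -> has_deriv (fun s => f s * g s) t (a * g t + f t * b).
Proof.
move=> /has_derivP[f1 f2] /has_derivP[g1 g2]; apply/has_derivP; split.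
- apply: is_derive_ext (is_deriveB (is_deriveM f1 g1) (is_deriveM f2 g2)) => [s|].
    by rewrite /= !fctE; case: (f s) => ? ?; case: (g s) => ? ? /=.
  by clear f1 f2 g1 g2; move: (f t) (g t) a b => [? ?] [? ?] [? ?] [? ?] /=; rewrite /GRing.scale /=; ring.
- apply: is_derive_ext (is_deriveD (is_deriveM f1 g2) (is_deriveM f2 g1)) => [s|].
    by rewrite /= !fctE; case: (f s) => ? ?; case: (g s) => ? ? /=.
  by clear f1 f2 g1 g2; move: (f t) (g t) a b => [? ?] [? ?] [? ?] [? ?] /=; rewrite /GRing.scale /=; ring.
Qed.

Arguments has_deriv_mul [f g t a b].
Arguments has_deriv_add [f g t a b].
Lemma has_deriv_cst (c : C) t : has_deriv (fun _ => c) t 0.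
Proof.
apply/has_derivP; split.
- exact: is_derive_cst.
- exact: is_derive_cst.
Qed.

Lemma has_deriv_expi t : has_deriv (@expi R) t ('i * expi t).
Proof.
apply/has_derivP; rewrite /expi /RtoC -complexiE; split.
- by apply: is_derive_ext (is_derive_cos t) => [s|] /=; ring.
- by apply: is_derive_ext (is_derive_sin t) => [s|] /=; ring.
Qed.

Lemma has_deriv0_cst (f : R -> C) : (forall t, has_deriv f t 0) -> forall t, f t = f 0.
Proof.
move=> H t.
have E1 : complex.Re (f t) = complex.Re (f 0).
  apply: (is_derive_0_is_cst (f := fun s => complex.Re (f s))) => x.
  by have /has_derivP[] := H x.
have E2 : complex.Im (f t) = complex.Im (f 0).
  apply: (is_derive_0_is_cst (f := fun s => complex.Im (f s))) => x.
  by have /has_derivP[] := H x.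
by move: E1 E2; case: (f t) => ? ?; case: (f 0) => ? ? /= -> ->.
Qed.

Lemma vderiv_lin n (c d : C) (f g : R -> 'cV[C]_n) f' g' t :
  has_vderiv f t f' -> has_vderiv g t g' ->
  has_vderiv (fun s => c *: f s + d *: g s) t (c *: f' + d *: g').
Proof.
move=> Hf Hg j.
have := has_deriv_add (has_deriv_mul (has_deriv_cst c t) (Hf j))
                                    (has_deriv_mul (has_deriv_cst d t) (Hg j)).
apply: has_deriv_ext => [s|]; rewrite !mxE; ring.
Qed.

Lemma vderiv_scal n (e : R -> C) e' (f : R -> 'cV[C]_n) f' t :
  has_deriv e t e' -> has_vderiv f t f' ->
  has_vderiv (fun s => e s *: f s) t (e' *: f t + e t *: f').
Proof.
move=> He Hf j.
have := has_deriv_mul He (Hf j).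
apply: has_deriv_ext => [s|]; rewrite !mxE //.
Qed.

Lemma vderiv0_cst n (f : R -> 'cV[C]_n) :
  (forall t, has_vderiv f t 0) -> forall t, f t = f 0.
Proof.
move=> H t; apply/matrixP => j k; rewrite (ord1 k).
apply: (@has_deriv0_cst (fun s => f s j 0)) => s.
by have := H s j; rewrite mxE.
Qed.

Lemma Pi_Mstar n (a b : 'cV[C]_n) :
  Pi_plus (Mstar R n) (a, b) =
  (('i / 2) *: (b - (1 + 'i) *: a), (1 - 'i) *: (('i / 2) *: (b - (1 + 'i) *: a))).
Proof.
have hI : Im_mx (Mstar R n) = (-1)%:M.
  apply/matrixP => j k; rewrite !mxE; case: eqP => _ /=.
  - by rewrite !mulr1n raddfB /= Im_i (Creal_ImP _ (real1 _)) sub0r.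
  - by rewrite !mulr0n raddf0.
have hJ : conj_mx (Mstar R n) = (1 + 'i)%:M.
  apply/matrixP => j k; rewrite !mxE; case: eqP => _ /=.
  - by rewrite !mulr1n rmorphB /= conjC1 conjCi opprK.
  - by rewrite !mulr0n rmorph0.
have hs : (-(2 * 'i : C))^-1 = 'i / 2.
  apply: mulr1_eq; have h2 : (2 : C) != 0 by rewrite pnatr_eq0.
  have hi : ('i : C) ^+ 2 = -1 by exact: sqrCi.
  by field: hi.
rewrite /Pi_plus /= hI hJ scale_scalar_mx mulrN1 invmx_scalar hs !mul_scalar_mx.
by [].
Qed.
End C.

Lemma alg2 (K : numClosedFieldType) n (r A B : 'cV[K]_n) :
'i *:
 ((1 - 'i) *:
  (('i / 2) *:
   (- ((1 - 'i) *: A - (1 - 'i) *: B) - (1 + 'i) *: ((1 - 'i) *: r + (A + B)))) +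
  'i *:
  ((1 - 'i) *:
   (('i / 2) *:
    (- ((1 - 'i) *: A - (1 - 'i) *: B) -
     (1 + 'i) *: ((1 - 'i) *: r + (A + B)))))) =
 (1 - 'i) *: r + 'i *: ((1 - 'i) *: r) +
 ((1 - 'i) *: A + 'i *: ((1 - 'i) *: A)) +
 ('i *: ((1 - 'i) *: B) + 'i *: ('i *: ((1 - 'i) *: B))).
Proof.
have hi : ('i : K) ^+ 2 = -1 by exact: sqrCi.
have h2 : (2 : K) != 0 by rewrite pnatr_eq0.
apply/matrixP => j k; rewrite !mxE. by field: hi.
Qed.
Lemma alg3 (K : numClosedFieldType) n (M : 'M[K]_n) (P D : 'cV[K]_n) (e : K) :
  'i *: D = (1%:M + M) *m P -> 'i *: (('i * e) *: P + e *: D) = M *m (e *: P).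
Proof.
move=> H; have hi : ('i : K) ^+ 2 = -1 by exact: sqrCi.
rewrite scalerDr; have -> : 'i *: (e *: D) = e *: ('i *: D) by rewrite !scalerA mulrC.
rewrite H mulmxDl mul1mx -scalemxAr.
move: (M *m P) => Q.
by apply/matrixP => j k; rewrite !mxE; ring: hi.
Qed.

Local Close Scope classical_set_scope.

Theorem mainTheorem9 (R : realType) (n : nat) (S F : 'M[R]_n)
  (hS : S^T = S) (hF : F^T = - F)
  (rho y rho' y' : R -> 'cV[R[i]]_n)
  (hrho : forall t, has_vderiv rho t (rho' t))
  (hy : forall t, has_vderiv y t (y' t))
  (hode : forall t,
     (rho' t, y' t) = Pi_plus (Mstar R n) (XH (S + F) (rho t) (y t))) :
  (* each leaf {phi = phi_0} is invariant: phi is constant along solutions *)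
  (forall t, phi_of (rho t) (y t) = phi_of (rho 0) (y 0)) /\
  (* on {phi = 0}: i psi' = (I + S + i F) psi *)
  (phi_of (rho 0) (y 0) = 0 ->
     forall t, exists dpsi : 'cV[R[i]]_n,
       has_vderiv (fun s => psi_of (rho s) (y s)) t dpsi /\
       'i *: dpsi = (1%:M + cmx S + 'i *: cmx F) *m psi_of (rho t) (y t)) /\
  (* equivalently, Psi(t) = e^{it} psi(t) satisfies i Psi' = (S + i F) Psi *)
  (phi_of (rho 0) (y 0) = 0 ->
     forall t, exists dPsi : 'cV[R[i]]_n,
       has_vderiv (fun s => expi s *: psi_of (rho s) (y s)) t dPsi /\
       'i *: dPsi = (cmx S + 'i *: cmx F) *m (expi t *: psi_of (rho t) (y t))).
Proof.
have hi : ('i : R[i]) ^+ 2 = -1 by exact: sqrCi.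
set u := fun t => ('i / 2) *: (- (cmx (S + F))^T *m y t - (1 + 'i) *: (y t + cmx (S + F) *m rho t)).
have hode' : forall t, rho' t = u t /\ y' t = (1 - 'i) *: u t.
  by move=> t; have := hode t; rewrite /XH Pi_Mstar => -[-> ->].
have P1 : forall t, phi_of (rho t) (y t) = phi_of (rho 0) (y 0).
  apply: (@vderiv0_cst R n (fun s => phi_of (rho s) (y s))) => t.
  have := @vderiv_lin R n (1 + 'i) (- 'i) _ _ _ _ t (hrho t) (hy t).
  move=> H j; have := H j; apply: has_deriv_ext => [s|].
    by rewrite /phi_of scaleNr.
  have [-> ->] := hode' t; move: (u t) => v; rewrite scalerA -scalerDl.
  have -> : (1 + 'i) + - 'i * (1 - 'i) = 0 :> R[i] by ring: hi.
  by rewrite scale0r mxE.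
have Y : phi_of (rho 0) (y 0) = 0 -> forall t, y t = (1 - 'i) *: rho t.
  move=> H0 t; have := P1 t; rewrite H0 /phi_of => /eqP; rewrite subr_eq0 => /eqP E.
  transitivity ((- 'i * 'i) *: y t); first by rewrite mulNr -expr2 hi opprK scale1r.
  rewrite -scalerA -E scalerA; congr (_ *: _); ring: hi.
have D2 : forall t, has_vderiv (fun s => psi_of (rho s) (y s)) t ((1 - 'i) *: rho' t + 'i *: y' t).
  by move=> t; exact: (@vderiv_lin R n (1 - 'i) 'i _ _ _ _ t (hrho t) (hy t)).
have hV : cmx (S + F) = cmx S + cmx F.
  by apply/matrixP => j k; rewrite !mxE /RtoC raddfD.
have hVt : (cmx (S + F))^T = cmx S - cmx F.
  apply/matrixP => j k; rewrite !mxE /RtoC -raddfB; congr (real_complex R _).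
  have -> : S k j = S j k by have := congr1 (fun M : 'M[R]_n => M j k) hS; rewrite !mxE.
  have -> : F k j = - F j k by have := congr1 (fun M : 'M[R]_n => M j k) hF; rewrite !mxE.
  by [].
have I2 : phi_of (rho 0) (y 0) = 0 -> forall t,
   'i *: ((1 - 'i) *: rho' t + 'i *: y' t) = (1%:M + cmx S + 'i *: cmx F) *m psi_of (rho t) (y t).
  move=> H0 t; have [-> ->] := hode' t; rewrite /u /psi_of (Y H0 t) hVt hV.
  rewrite !(mulmxDl, mulmxBl, mulmxDr, mulmxBr, mulNmx, mulmxN, mul1mx) -?scalemxAl -?scalemxAr.
  rewrite -?scalemxAl -?scalemxAr.
  move: (rho t) => r; set A := cmx S *m r; set B := cmx F *m r; clearbody A B.
  exact: alg2.
split; first exact: P1.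
split.
- move=> H0 t; exists ((1 - 'i) *: rho' t + 'i *: y' t); split; [exact: D2 | exact: I2].
- move=> H0 t; exists (('i * expi t) *: psi_of (rho t) (y t) + expi t *: ((1 - 'i) *: rho' t + 'i *: y' t)).
  split.
  + exact: (@vderiv_scal R n (@expi R) _ _ _ t (has_deriv_expi R t) (D2 t)).
  + apply: alg3; rewrite addrA; exact: I2.
Qed.
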